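(* Let $\mathcal L:\mathbb F^{q\times q}\to\mathbb F^{n\times n}$ be linear, $m=\operatorname{rank}\mathbb L$, and let $L_1,\ldots,L_m$, $A_1,\ldots,A_m$, $B_1,\ldots,B_m$ be as in the construction below. The following are equivalent: (i) $\mathcal L$ is $*$-linear; (ii) $L=\sum_{k=1}^m\overline{L_k}\otimes A_k$; (iii) $L_k=\sum_{l=1}^m\vec{\mathbf 1}_n^*(B_k\circ\overline{L_l})\vec{\mathbf 1}_q\,A_l$ for $k=1,\ldots,m$. If these hold, then $\vec{\mathbf 1}_n^*(B_k\circ\overline{L_l})\vec{\mathbf 1}_q=\vec{\mathbf 1}_n^*(\overline{B_l}\circ L_k)\vec{\mathbf 1}_q$ for all $k,l=1,\ldots,m$.
   Context: $\mathbb F\in\{\mathbb R,\mathbb C\}$; $\otimes$ Kronecker, $\circ$ Hadamard product, $\vec{\mathbf 1}_p$ all-ones vector, $\overline X$ entrywise conjugate. $*$-linear: $\mathcal L(V^* )=\mathcal L(V)^*$. Matricization $L\in\mathbb F^{n^2\times q^2}$ with $L\operatorname{vec}(V)=\operatorname{vec}(\mathcal L(V))$ (column-stacking), $L=[L_{ij}]$, $1\le i\le n$, $1\le j\le q$, $L_{ij}\in\mathbb F^{n\times q}$; Choi matrix $\mathbb L=[\mathcal L(\mathcal E^{(q)}_{ij})]_{i,j=1}^q$, $m=\operatorname{rank}\mathbb L=\dim\operatorname{span}\{L_{ij}\}$. Construction: $L_1,\ldots,L_m$ span $\operatorname{span}\{L_{ij}\}$; $L_{ij}=\sum_k\alpha^{ij}_kL_k$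 (unique), $L_k=\sum_{i,j}\beta^k_{ij}L_{ij}$ (any choice); $A_k$ has $(i,j)$ entry $\overline{\alpha^{ij}_k}$, $B_k$ has $(i,j)$ entry $\beta^k_{ij}$. (One always has $L=\sum_k\overline{A_k}\otimes L_k$.) *)

(* Defs.v *)
From HB Require Import structures.
From mathcomp Require Import all_boot all_order all_algebra.
From mathcomp Require Export mxtens.
Set Implicit Arguments. Unset Strict Implicit. Unset Printing Implicit Defensive.
Import Order.TTheory GRing.Theory Num.Theory.
Local Open Scope ring_scope.

Definition mconj (F : fieldType) (conj : F -> F) m n (A : 'M[F]_(m, n)) :
  'M[F]_(m, n) := map_mx conj A.

Definition adjmx (F : fieldType) (conj : F -> F) m n (A : 'M[F]_(m, n)) :
  'M[F]_(n, m) := (map_mx conj A)^T.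

Definition star_linear (F : fieldType) (conj : F -> F) q n
  (Lmap : 'M[F]_q -> 'M[F]_n) : Prop :=
  forall V : 'M[F]_q, Lmap (adjmx conj V) = adjmx conj (Lmap V).

(* Column-stacking vectorization: the entry A a b sits at index b*m + a. *)
Definition vecc (F : fieldType) m n (A : 'M[F]_(m, n)) : 'cV[F]_(n * m) :=
  \col_k A (mxtens_unindex k).2 (mxtens_unindex k).1.

(* The (i,j) block (size n x q) of a (n*n) x (q*q) matrix L = [L_ij]. *)
Definition Lblk (F : fieldType) n q (L : 'M[F]_(n * n, q * q))
  (i : 'I_n) (j : 'I_q) : 'M[F]_(n, q) :=
  \matrix_(r, a) L (mxtens_index (i, r)) (mxtens_index (j, a)).

Definition choi (F : fieldType) q n (Lmap : 'M[F]_q -> 'M[F]_n) :=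
  \mxblock_(i < q, j < q) Lmap (delta_mx i j).

Definition hadamard (F : fieldType) m n (A B : 'M[F]_(m, n)) : 'M[F]_(m, n) :=
  \matrix_(i, j) (A i j * B i j).

Definition ones (F : fieldType) n : 'cV[F]_n := const_mx 1.

Definition onesform (F : fieldType) (conj : F -> F) n q (X : 'M[F]_(n, q)) : F :=
  (adjmx conj (ones F n) *m X *m ones F q) 0 0.

(* Main.v *)
Require Import Defs.
From HB Require Import structures.
From mathcomp Require Import all_boot all_order all_algebra.
From mathcomp Require Import mxtens.
From mathcomp Require Import ring.
Import GRing.Theory.
Local Open Scope ring_scope.

Lemma onesformE (F : fieldType) (conj : {rmorphism F -> F}) n q (X : 'M[F]_(n, q)) :
  onesform conj X = \sum_i \sum_j X i j.
Proof.
rewrite /onesform !mxE exchange_big /=; apply: eq_bigr => j _.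
rewrite !mxE mulr1; apply: eq_bigr => i _.
by rewrite /adjmx /ones !mxE rmorph1 mul1r.
Qed.

Lemma veccE (F : fieldType) m n (A : 'M[F]_(m, n)) i j :
  vecc A (mxtens_index (i, j)) 0 = A j i.
Proof. by rewrite /vecc mxE mxtens_indexK. Qed.

Lemma hE_lemma (F : fieldType) n q (Lmap : 'M[F]_q -> 'M[F]_n)
  (L : 'M[F]_(n * n, q * q))
  (hL : forall V : 'M[F]_q, L *m vecc V = vecc (Lmap V)) a b r i :
  Lmap (delta_mx a b) r i = L (mxtens_index (i, r)) (mxtens_index (b, a)).
Proof.
have := congr1 (fun M : 'M[F]_(n * n, 1) => M (mxtens_index (i, r)) 0) (hL (delta_mx a b)).
rewrite veccE mxE => <-.
rewrite (bigD1 (mxtens_index (b, a))) //= big1 => [|k nek].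
  by rewrite veccE mxE !eqxx mulr1 addr0.
case: (mxtens_indexP k) nek => j' i' nek.
rewrite veccE mxE.
case: eqP => [ea|]; last by rewrite mulr0.
case: eqP => [eb|]; last by rewrite mulr0.
by rewrite -ea -eb eqxx in nek.
Qed.

Lemma swap3 (R : nmodType) a b c (f : 'I_a -> 'I_b -> 'I_c -> R) :
  \sum_i \sum_j \sum_l f i j l = \sum_l \sum_i \sum_j f i j l.
Proof. by under eq_bigr do rewrite exchange_big; exact: exchange_big. Qed.

Theorem proposition5p3
  (F : fieldType) (conj : {rmorphism F -> F}) (conjK : involutive conj)
  (n q m : nat)
  (Lmap : {linear 'M[F]_q -> 'M[F]_n})
  (L : 'M[F]_(n * n, q * q))
  (hL : forall V : 'M[F]_q, L *m vecc V = vecc (Lmap V))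
  (hm : m = \rank (choi Lmap))
  (Lk : 'I_m -> 'M[F]_(n, q))
  (alpha : 'I_n -> 'I_q -> 'I_m -> F)
  (beta : 'I_m -> 'I_n -> 'I_q -> F)
  (halpha : forall (i : 'I_n) (j : 'I_q),
      Lblk L i j = \sum_(k < m) alpha i j k *: Lk k)
  (hbeta : forall k : 'I_m,
      Lk k = \sum_(i < n) \sum_(j < q) beta k i j *: Lblk L i j) :
  let A : 'I_m -> 'M[F]_(n, q) := fun k => \matrix_(i, j) conj (alpha i j k) in
  let B : 'I_m -> 'M[F]_(n, q) := fun k => \matrix_(i, j) beta k i j in
  ((star_linear conj Lmap <->
      L = \sum_(k < m) tensmx (mconj conj (Lk k)) (A k))
   /\ (L = \sum_(k < m) tensmx (mconj conj (Lk k)) (A k) <->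
      (forall k : 'I_m, Lk k =
         \sum_(l < m) onesform conj (hadamard (B k) (mconj conj (Lk l))) *: A l)))
  /\ (star_linear conj Lmap ->
      forall k l : 'I_m,
        onesform conj (hadamard (B k) (mconj conj (Lk l)))
        = onesform conj (hadamard (mconj conj (B l)) (Lk k))).
Proof.
move=> A B.
pose ell (i r : 'I_n) (j a : 'I_q) := L (mxtens_index (i, r)) (mxtens_index (j, a)).
have hE a b r i : Lmap (delta_mx a b) r i = ell i r b a by exact: hE_lemma.
have hLk i r j a : ell i r j a = \sum_k alpha i j k * Lk k r a.
  have := congr1 (fun M : 'M[F]_(n, q) => M r a) (halpha i j).
  by rewrite /ell mxE summxE => ->; apply: eq_bigr => k _; rewrite mxE.
have hbk k r a : Lk k r a = \sum_i \sum_j beta k i j * ell i r j a.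
  rewrite {1}(hbeta k) summxE; apply: eq_bigr => i _.
  by rewrite summxE; apply: eq_bigr => j _; rewrite !mxE.
pose c k l := \sum_i \sum_j beta k i j * conj (Lk l i j).
have hc k l : onesform conj (hadamard (B k) (mconj conj (Lk l))) = c k l.
  rewrite onesformE; apply: eq_bigr => i _; apply: eq_bigr => j _.
  by rewrite !mxE.
pose P := forall i r j a, ell i r j a = conj (ell r i a j).
have hconj i r j a : conj (ell r i a j) = \sum_k conj (Lk k i j) * conj (alpha r a k).
  by rewrite hLk rmorph_sum; apply: eq_bigr => k _; rewrite rmorphM mulrC.
have hLV V r i : Lmap V r i = \sum_a \sum_b V a b * ell i r b a.
  rewrite {1}(matrix_sum_delta V) linear_sum summxE; apply: eq_bigr => a _.
  by rewrite linear_sum summxE; apply: eq_bigr => b _; rewrite linearZ mxE hE.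
have adjE a b : adjmx conj (delta_mx a b) = delta_mx b a :> 'M[F]_q.
  by apply/matrixP => x y; rewrite /adjmx !mxE rmorph_nat andbC.
have S1 : star_linear conj Lmap <-> P.
  split.
    move=> H i r j a.
    rewrite -hE -adjE H /adjmx !mxE hE //.
  move=> HP V; apply/matrixP => r i0.
  rewrite hLV /adjmx !mxE hLV rmorph_sum exchange_big; apply: eq_bigr => a _.
  rewrite rmorph_sum; apply: eq_bigr => b _.
  by rewrite !mxE rmorphM HP.
have hMt i r j a : (\sum_(k < m) tensmx (mconj conj (Lk k)) (A k))
     (mxtens_index (i, r)) (mxtens_index (j, a))
     = \sum_k conj (Lk k i j) * conj (alpha r a k).
  by rewrite summxE; apply: eq_bigr => k _; rewrite tensmxE /A !mxE.
have S2 : L = \sum_(k < m) tensmx (mconj conj (Lk k)) (A k) <-> P.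
  split.
    by move=> H i r j a; rewrite hconj -hMt -H.
  move=> HP; apply/matrixP => x y.
  case: (mxtens_indexP x) => i r; case: (mxtens_indexP y) => j a.
  by rewrite hMt -hconj; exact: HP.
have S3 : P -> forall k, Lk k = \sum_(l < m) c k l *: A l.
  move=> HP k; apply/matrixP => r a; rewrite hbk summxE.
  transitivity (\sum_i \sum_j \sum_l beta k i j * conj (Lk l i j) * conj (alpha r a l)).
    apply: eq_bigr => i _; apply: eq_bigr => j _.
    by rewrite HP hconj mulr_sumr; apply: eq_bigr => l _; rewrite mulrA.
  rewrite swap3; apply: eq_bigr => l _; rewrite /A !mxE mulr_suml.
  by apply: eq_bigr => i _; rewrite mulr_suml.
have indep : forall d : 'I_m -> F, \sum_l d l *: Lk l = 0 -> forall l, d l = 0.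
  pose Xa a : 'M[F]_(n, m) := \matrix_(r, l) Lk l r a.
  pose Yb b : 'M[F]_(m, n) := \matrix_(l, i) alpha i b l.
  have hchoi : choi Lmap = \mxcol_a Xa a *m \mxrow_b Yb b.
    rewrite mul_mxcol_mxrow /choi; apply: eq_mxblock => a b.
    apply/matrixP => r i; rewrite hE hLk !mxE; apply: eq_bigr => l _.
    by rewrite !mxE mulrC.
  pose X := \mxcol_a Xa a.
  have rX : \rank X^T = m.
    rewrite mxrank_tr; apply/eqP; rewrite eqn_leq rank_leq_col /=.
    by have := mxrankM_maxl X (\mxrow_b Yb b); rewrite -hchoi -hm.
  have rf : row_free X^T by rewrite /row_free rX.
  move=> d hd l.
  pose v : 'rV[F]_m := \row_l d l.
  have : v *m X^T = 0 *m X^T.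
    rewrite mul0mx -[v]trmxK -trmx_mul mxcol_mul.
    suff -> : \mxcol_a (Xa a *m v^T) = \mxcol_a (0 : 'M[F]_(n, 1)) by rewrite mxcol0 trmx0.
    apply: eq_mxcol => a; apply/matrixP => r z.
    transitivity ((\sum_k d k *: Lk k) r a); last by rewrite hd !mxE.
    rewrite !mxE summxE; apply: eq_bigr => l' _; rewrite !mxE mulrC.
    by [].
  move/(row_free_inj rf) => hv.
  by have := congr1 (fun M : 'rV[F]_m => M 0 l) hv; rewrite !mxE.
have Zid : forall k l, \sum_i \sum_j beta k i j * alpha i j l = (k == l)%:R.
  move=> k l; apply/eqP; rewrite -subr_eq0; apply/eqP; move: l.
  apply: (indep (fun l => \sum_i \sum_j beta k i j * alpha i j l - (k == l)%:R)).
  apply/matrixP => r a; rewrite summxE mxE.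
  under eq_bigr do rewrite mxE mulrBl.
  rewrite sumrB.
  have -> : \sum_l (k == l)%:R * Lk l r a = Lk k r a.
    rewrite (bigD1 k) //= eqxx mul1r big1 ?addr0 // => l.
    by rewrite eq_sym => /negbTE ->; rewrite mul0r.
  apply/eqP; rewrite subr_eq0; apply/eqP.
  rewrite [RHS]hbk.
  transitivity (\sum_i \sum_j \sum_l beta k i j * alpha i j l * Lk l r a).
    by rewrite swap3; apply: eq_bigr => l _; rewrite mulr_suml;
      apply: eq_bigr => i _; rewrite mulr_suml.
  apply: eq_bigr => i _; apply: eq_bigr => j _.
  by rewrite hLk mulr_sumr; apply: eq_bigr => l _; rewrite mulrA.
have HLe : (forall k, Lk k = \sum_(l < m) c k l *: A l) ->
    forall l i j, Lk l i j = \sum_l' c l l' * conj (alpha i j l').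
  move=> H l i j; rewrite {1}(H l) summxE; apply: eq_bigr => l' _.
  by rewrite /A !mxE.
have S4 : (forall k, Lk k = \sum_(l < m) c k l *: A l) -> forall k l, c k l = conj (c l k).
  move=> H k l; rewrite {1}/c.
  transitivity (\sum_i \sum_j \sum_l' beta k i j * alpha i j l' * conj (c l l')).
    apply: eq_bigr => i _; apply: eq_bigr => j _.
    rewrite (HLe H) rmorph_sum mulr_sumr; apply: eq_bigr => l' _.
    by rewrite rmorphM conjK mulrA -!mulrA [conj _ * _]mulrC.
  rewrite swap3.
  transitivity (\sum_l' (k == l')%:R * conj (c l l')).
    apply: eq_bigr => l' _; rewrite -Zid mulr_suml; apply: eq_bigr => i _.
    by rewrite mulr_suml.
  rewrite (bigD1 k) //= eqxx mul1r big1 ?addr0 // => l'.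
  by rewrite eq_sym => /negbTE ->; rewrite mul0r.
have S5 : (forall k, Lk k = \sum_(l < m) c k l *: A l) -> P.
  move=> H i r j a; rewrite hLk hconj.
  transitivity (\sum_k \sum_l alpha i j k * c k l * conj (alpha r a l)).
    apply: eq_bigr => k _; rewrite (HLe H) mulr_sumr; apply: eq_bigr => l _.
    by rewrite mulrA.
  rewrite exchange_big; apply: eq_bigr => l _.
  rewrite (HLe H) rmorph_sum mulr_suml; apply: eq_bigr => k _.
  rewrite rmorphM conjK -(S4 H) -/(c l k).
  by rewrite [alpha i j k * _]mulrC.
have hiii : (forall k : 'I_m, Lk k =
         \sum_(l < m) onesform conj (hadamard (B k) (mconj conj (Lk l))) *: A l)
   <-> (forall k, Lk k = \sum_(l < m) c k l *: A l).
  by split => H k; rewrite H; apply: eq_bigr => l _; rewrite hc.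
rewrite hiii; split; first by split; [rewrite S1 S2 | rewrite S2; split; [exact: S3 | exact: S5]].
move=> /S1 /S3 /S4 H k l; rewrite hc H onesformE rmorph_sum; apply: eq_bigr => i _.
rewrite rmorph_sum; apply: eq_bigr => j _; rewrite !mxE rmorphM conjK.
by [].
Qed.
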